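(* Let $\lambda=0.098$, $f_1=5-\log5$, and define $V(f)=\frac{\pi}{2^{1/2}}+\lambda(f-1)^{3/2}$ and $W(f)=V(f)^2-\log(4V(f)^2)-f$ for $f\ge1$. Then $0<\lambda<\dfrac{2J(f_1)}{3(f_1-1)}$, $W(f_1)>0$, and $W'(f_1)<0$.
   Context: For $f>1$ let $h^*(f)>1$ and $h_*(f)\in(0,1)$ be the two solutions $h$ of $h-\log h=f$, and set $J(f)=\frac1{h^*(f)-1}+\frac1{1-h_*(f)}-\big(\frac2{f-1}\big)^{1/2}$. *)

(* Defs.v *)
From Stdlib Require Import Reals Lra ClassicalEpsilon.
From Coquelicot Require Import Coquelicot.
Open Scope R_scope.

(* h^*(f): the solution h > 1 of h - ln h = f (unique for f > 1). *)
Definition h_upper (f : R) : R :=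
  epsilon (inhabits 1) (fun h => 1 < h /\ h - ln h = f).

(* h_*(f): the solution h in (0,1) of h - ln h = f (unique for f > 1). *)
Definition h_lower (f : R) : R :=
  epsilon (inhabits 1) (fun h => 0 < h < 1 /\ h - ln h = f).

Definition J (f : R) : R :=
  / (h_upper f - 1) + / (1 - h_lower f) - sqrt (2 / (f - 1)).

Definition lam : R := 0.098.

Definition f1 : R := 5 - ln 5.

(* (f-1)^{3/2} written as (f-1) * sqrt (f-1), valid for f >= 1. *)
Definition V (f : R) : R := PI / sqrt 2 + lam * ((f - 1) * sqrt (f - 1)).

Definition W (f : R) : R := (V f) ^ 2 - ln (4 * (V f) ^ 2) - f.

(* Main.v *)
Require Import Defs.
From Stdlib Require Import Reals.
From Coquelicot Require Import Coquelicot.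
From Stdlib Require Import Lra Arith ClassicalEpsilon.
Open Scope R_scope.

Lemma exp_taylor_lb x n : 0 <= x -> sum_f_R0 (fun i => / INR (fact i) * x ^ i) n <= exp x.
Proof. intros Hx. unfold exp. destruct (exist_exp x) as [l Hl]. simpl. apply sum_incr; [exact Hl|].
intros; apply Rmult_le_pos; [left; apply Rinv_0_lt_compat, INR_fact_lt_0 | apply pow_le; auto]. Qed.

Lemma ln5_hi : ln 5 < 1.60944.
Proof.
  rewrite <- (ln_exp 1.60944). apply ln_increasing; [lra|].
  eapply Rlt_le_trans; [| apply (exp_taylor_lb _ 14); lra].
  cbn [sum_f_R0]. repeat rewrite fact_simpl. rewrite !mult_INR. simpl INR. lra.
Qed.

Lemma exp_c0 : 5.340482 <= exp 1.675316.
Proof.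
  eapply Rle_trans; [| apply (exp_taylor_lb _ 14); lra].
  cbn [sum_f_R0]. repeat rewrite fact_simpl. rewrite !mult_INR. simpl INR. lra.
Qed.

Lemma PI_bnds : 3.141592 < PI < 3.1416.
Proof.
  destruct (PI_2_3_7_ineq 6) as [H1 H2].
  cbn [sum_f_R0] in H1, H2. unfold tg_alt, PI_2_3_7_tg, Ratan_seq in H1, H2.
  simpl in H1, H2. lra.
Qed.

Lemma exp_le_inv z : z < 1 -> exp z <= / (1 - z).
Proof.
  intros Hz. pose proof (exp_ineq1_le (-z)).
  assert (e : exp z = / exp (- z)) by (rewrite exp_Ropp, Rinv_inv; reflexivity).
  rewrite e. apply Rinv_le_contravar; lra.
Qed.

Lemma exp_sq x a b : exp x <= a -> a * a <= b -> exp (2 * x) <= b.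
Proof.
  intros H1 H2. replace (2 * x) with (x + x) by ring. rewrite exp_plus.
  pose proof (exp_pos x). nra.
Qed.

Lemma ln5_lo : 1.607 < ln 5.
Proof.
  rewrite <- (ln_exp 1.607). apply ln_increasing; [apply exp_pos|].
  assert (H0 : exp (1.607/1024) <= 1.001571802624).
  { eapply Rle_trans; [apply exp_le_inv; lra| lra]. }
  pose proof (exp_sq _ _ 1.003146075812 H0 ltac:(lra)) as H1.
  pose proof (exp_sq _ _ 1.006302049418 H1 ltac:(lra)) as H2.
  pose proof (exp_sq _ _ 1.012643814663 H2 ltac:(lra)) as H3.
  pose proof (exp_sq _ _ 1.025447495376 H3 ltac:(lra)) as H4.
  pose proof (exp_sq _ _ 1.051542565773 H4 ltac:(lra)) as H5.
  pose proof (exp_sq _ _ 1.105741767633 H5 ltac:(lra)) as H6.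
  pose proof (exp_sq _ _ 1.222664856689 H6 ltac:(lra)) as H7.
  pose proof (exp_sq _ _ 1.494909351783 H7 ltac:(lra)) as H8.
  pose proof (exp_sq _ _ 2.234753970049 H8 ltac:(lra)) as H9.
  pose proof (exp_sq _ _ 4.994125306650 H9 ltac:(lra)) as H10.
  replace 1.607 with (2 * (2 * (2 * (2 * (2 * (2 * (2 * (2 * (2 * (2 * (1.607 / 1024)))))))))))
    by lra.
  lra.
Qed.

Lemma sqrt_bnd x a b : 0 <= a -> 0 <= b -> a * a < x -> x < b * b -> a < sqrt x < b.
Proof.
  intros. assert (Hx : 0 <= x) by nra. pose proof (sqrt_sqrt x Hx). pose proof (sqrt_pos x).
  split; nra.
Qed.

Lemma incr_upper a b : 1 < a -> a < b -> a - ln a < b - ln b.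
Proof.
  intros Ha Hab.
  assert (E : b / a * a = b) by (field; lra).
  assert (Hba : 1 < b / a) by nra.
  assert (Hl : 0 < ln (b / a)) by (rewrite <- ln_1; apply ln_increasing; lra).
  pose proof (exp_ineq1 (ln (b / a)) ltac:(lra)) as He.
  rewrite exp_ln in He by lra. rewrite ln_div in He, Hl by lra.
  assert (b / a - 1 < b - a).
  { assert (b / a < b) by nra. nra. }
  lra.
Qed.

Lemma h_upper_f1 : h_upper f1 = 5.
Proof.
  unfold h_upper.
  destruct (epsilon_spec (inhabits 1) (fun h => 1 < h /\ h - ln h = f1)) as [H1 H2].
  { exists 5; split; [lra | unfold f1; ring]. }
  set (h := epsilon _ _) in *.
  assert (E : 5 - ln 5 = f1) by (unfold f1; ring).
  destruct (Rtotal_order h 5) as [Hl | [He | Hg]]; auto.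
  - pose proof (incr_upper h 5 H1 Hl). lra.
  - pose proof (incr_upper 5 h ltac:(lra) Hg). lra.
Qed.

Lemma f1_bnd : 2.39056 < f1 - 1 < 2.393.
Proof. pose proof ln5_hi; pose proof ln5_lo. unfold f1. lra. Qed.

Lemma exp5 : exp 5 <= 243.
Proof.
  replace 5 with (1 + 1 + 1 + 1 + 1) by ring. rewrite !exp_plus.
  pose proof exp_le_3. pose proof (exp_pos 1). set (e := exp 1) in *.
  assert (e * e <= 9) by nra. assert (e * e * e <= 27) by nra.
  assert (e * e * e * e <= 81) by nra. nra.
Qed.

Lemma h_lower_f1 : 5 / 243 < h_lower f1 < 1.
Proof.
  pose proof f1_bnd.
  assert (Hex : exists h, 0 < h < 1 /\ h - ln h = f1).
  { assert (Hc : continuity (fun t => exp (- t) + t - f1)).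
    { intros x. reg. }
    assert (Hf0 : (fun t => exp (- t) + t - f1) 0 < 0).
    { cbv beta. rewrite Ropp_0, exp_0. lra. }
    assert (Hf4 : 0 < (fun t => exp (- t) + t - f1) 4).
    { cbv beta. pose proof (exp_pos (Ropp 4)). lra. }
    destruct (IVT _ 0 4 Hc ltac:(lra) Hf0 Hf4) as [z [Hz Fz]].
    cbv beta in Fz.
    assert (Hz0 : z <> 0).
    { intros ->. cbv beta in Hf0. lra. }
    exists (exp (- z)). split; [split|].
    - apply exp_pos.
    - rewrite <- exp_0. apply exp_increasing. lra.
    - rewrite ln_exp. lra. }
  unfold h_lower.
  destruct (epsilon_spec (inhabits 1) (fun h => 0 < h < 1 /\ h - ln h = f1) Hex) as [H1 H2].
  set (h := epsilon _ _) in *.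
  split; [| lra].
  assert (Hh : h = exp (h - f1)) by (rewrite <- (exp_ln h) at 1 by lra; f_equal; lra).
  assert (Hlt : exp (- f1) < h) by (rewrite Hh; apply exp_increasing; lra).
  assert (Ef : exp (- f1) = 5 * / exp 5).
  { unfold f1. replace (- (5 - ln 5)) with (ln 5 + Ropp 5) by ring.
    rewrite exp_plus, exp_ln, exp_Ropp by lra. reflexivity. }
  pose proof exp5. pose proof (exp_pos 5).
  assert (/ 243 <= / exp 5) by (apply Rinv_le_contravar; lra).
  lra.
Qed.

Lemma sqrt2_bnd : 1.41421356 < sqrt 2 < 1.41421357.
Proof. apply sqrt_bnd; lra. Qed.

Lemma s_bnd : 1.546143 < sqrt (f1 - 1) < 1.547.
Proof. pose proof f1_bnd. apply sqrt_bnd; lra. Qed.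

Lemma q_bnd : 2.2214409 < PI / sqrt 2 < 2.2214467.
Proof.
  pose proof sqrt2_bnd. pose proof PI_bnds.
  assert (Hq : PI / sqrt 2 * sqrt 2 = PI) by (field; apply Rgt_not_eq; lra).
  assert (Hp : 0 < PI / sqrt 2) by (apply Rdiv_lt_0_compat; lra).
  set (q := PI / sqrt 2) in *. split; nra.
Qed.

Lemma V_bnd : 2.5836633 <= V f1 <= 2.58424.
Proof.
  pose proof q_bnd. pose proof s_bnd. pose proof f1_bnd.
  unfold V, lam.
  assert (2.39056 * 1.546143 <= (f1 - 1) * sqrt (f1 - 1))
    by (apply Rmult_le_compat; lra).
  assert ((f1 - 1) * sqrt (f1 - 1) <= 2.393 * 1.547)
    by (apply Rmult_le_compat; lra).
  lra.
Qed.

Lemma derW : 0 < f1 - 1 -> 0 < V f1 ->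
  is_derive W f1 ((2 * V f1 - 2 / V f1) * (lam * (3/2) * sqrt (f1 - 1)) - 1).
Proof.
  intros H1 H2.
  unfold W. unfold V at 1 2 3.
  auto_derive.
  all: unfold V in *; unfold Rminus in *.
  all: assert (hs : sqrt (f1 + -(1)) * sqrt (f1 + -(1)) = f1 + -(1)) by (apply sqrt_sqrt; lra).
  all: assert (hs0 : 0 < sqrt (f1 + -(1))) by (apply sqrt_lt_R0; lra).
  all: revert hs hs0 H2; generalize (sqrt (f1 + -(1))); intros s hs hs0 H2.
  - nra.
  - rewrite <- hs.
    assert (Hq : 0 < sqrt 2) by (apply sqrt_lt_R0; lra).
    assert (Hl : 0 < lam) by (unfold lam; lra).
    assert (H3 : 0 < s*s*s) by (apply Rmult_lt_0_compat; [apply Rmult_lt_0_compat|]; lra).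
    assert (H4 : 0 < lam * (s*s*s) * sqrt 2) by (apply Rmult_lt_0_compat; [apply Rmult_lt_0_compat|]; lra).
    pose proof PI_RGT_0.
    field. repeat split; apply Rgt_not_eq; lra.
Qed.

Theorem lemma2p8 :
  (0 < lam /\ lam < 2 * J f1 / (3 * (f1 - 1))) /\
  0 < W f1 /\
  (exists l : R, is_derive W f1 l /\ l < 0).
Proof.
  pose proof f1_bnd as Hf. pose proof V_bnd as HV. pose proof s_bnd as Hs.
  split; [split|split].
  - unfold lam; lra.
  -
    assert (HJ : 0.3563 < J f1).
    { unfold J. rewrite h_upper_f1.
      pose proof h_lower_f1 as Hl.
      assert (/ (1 - 5/243) <= / (1 - h_lower f1)) by (apply Rinv_le_contravar; lra).
      assert (Hsq : sqrt (2 / (f1 - 1)) < 0.91468).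
      { apply (sqrt_bnd _ 0); try lra.
        - rewrite Rmult_0_l. apply Rdiv_lt_0_compat; lra.
        - assert (/ (f1 - 1) < / 2.39056) by (apply Rinv_lt_contravar; nra).
          unfold Rdiv. lra. }
      replace (5 - 1) with 4 by ring. lra. }
    apply (Rmult_lt_reg_r (3 * (f1 - 1))); [lra|].
    unfold Rdiv. rewrite Rmult_assoc, Rinv_l by (apply Rgt_not_eq; lra).
    unfold lam. lra.
  -
    unfold W.
    set (v := V f1) in *.
    assert (Hu : 6.675316 <= v ^ 2) by nra.
    set (d := v ^ 2 - 6.675316).
    assert (Hd : 0 <= d) by (unfold d; lra).
    assert (Hexp : 4 * v ^ 2 < 5 * exp (v ^ 2 - 5)).
    { replace (v ^ 2 - 5) with (1.675316 + d) by (unfold d; lra).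
      rewrite exp_plus. pose proof exp_c0. pose proof (exp_ineq1_le d).
      assert (5.340482 * (1 + d) <= exp 1.675316 * exp d)
        by (apply Rmult_le_compat; lra).
      replace (v ^ 2) with (6.675316 + d) by (unfold d; lra). lra. }
    assert (Hln : ln (4 * v ^ 2) < ln (5 * exp (v ^ 2 - 5))).
    { apply ln_increasing; [nra | exact Hexp]. }
    rewrite (ln_mult 5), ln_exp in Hln by (try apply exp_pos; lra).
    unfold f1. lra.
  - eexists. split.
    + apply derW; lra.
    + assert (Hinv : / 2.58424 <= / V f1) by (apply Rinv_le_contravar; lra).
      assert (HA : 0 <= V f1 - / V f1).
      { assert (/ V f1 <= / 1) by (apply Rinv_le_contravar; lra). lra. }
      assert (HP : (V f1 - / V f1) * sqrt (f1 - 1) <= (2.58424 - / 2.58424) * 1.547)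
        by (apply Rmult_le_compat; lra).
      replace ((2 * V f1 - 2 / V f1) * (lam * (3 / 2) * sqrt (f1 - 1)) - 1)
        with (3 * lam * ((V f1 - / V f1) * sqrt (f1 - 1)) - 1) by (field; apply Rgt_not_eq; lra).
      unfold lam. lra.
Qed.
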